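(* Let $\alpha$ be a rational with $0<\alpha<1$, let $\mathsf{S}_1,\mathsf{S}_2,\ldots$ be positive rationals, and define $\mathsf{srtt}_1=\mathsf{S}_1$ and $\mathsf{srtt}_j=(1-\alpha)\mathsf{srtt}_{j-1}+\alpha\mathsf{S}_j$ for $j>1$. Let $c,r>0$ be rationals, let $i\ge 2$ and $n\ge 0$ be integers, and suppose $\mathsf{S}_i,\mathsf{S}_{i+1},\ldots,\mathsf{S}_{i+n}\in[c-r,c+r]$. Then $L\le \mathsf{srtt}_{i+n}\le H$, where $L=(1-\alpha)^{n+1}\mathsf{srtt}_{i-1}+\bigl(1-(1-\alpha)^{n+1}\bigr)(c-r)$ and $H=(1-\alpha)^{n+1}\mathsf{srtt}_{i-1}+\bigl(1-(1-\alpha)^{n+1}\bigr)(c+r)$.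
   Context: This models the smoothed round-trip-time estimator of the TCP retransmission timeout computation; $\mathsf{S}_j$ are RTT samples. *)

(* Defs.v *)
From mathcomp Require Import all_boot all_order all_algebra.
Set Implicit Arguments. Unset Strict Implicit. Unset Printing Implicit Defensive.
Import Order.TTheory GRing.Theory Num.Theory.
Local Open Scope ring_scope.

(* Smoothed RTT: sequences are indexed from 1; index 0 is unused.
   srtt a S 1 = S 1, srtt a S j = (1 - a) * srtt a S (j-1) + a * S j for j > 1.
   (srtt a S 0 is set to S 0, a junk value never used.) *)
Fixpoint srtt (a : rat) (S : nat -> rat) (j : nat) : rat :=
  match j with
  | 0%N => S 0%N
  | 1%N => S 1%N
  | j'.+1 => (1 - a) * srtt a S j' + a * S j
  end.

(* Main.v *)
Require Import Defs.
From mathcomp Require Import all_boot all_order all_algebra.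
From mathcomp Require Import ring lra.
Import Order.TTheory GRing.Theory Num.Theory.
Local Open Scope ring_scope.

Lemma srttS a S j : (1 <= j)%N -> srtt a S j.+1 = (1 - a) * srtt a S j + a * S j.+1.
Proof. by case: j. Qed.

Theorem theorem2 (a : rat) (S : nat -> rat) (c r : rat) (i n : nat) :
  0 < a -> a < 1 ->
  (forall j : nat, (1 <= j)%N -> 0 < S j) ->
  0 < c -> 0 < r ->
  (2 <= i)%N ->
  (forall j : nat, (i <= j <= i + n)%N -> c - r <= S j <= c + r) ->
  (1 - a) ^+ n.+1 * srtt a S i.-1 + (1 - (1 - a) ^+ n.+1) * (c - r)
    <= srtt a S (i + n) /\
  srtt a S (i + n)
    <= (1 - a) ^+ n.+1 * srtt a S i.-1 + (1 - (1 - a) ^+ n.+1) * (c + r).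
Proof.
move=> a0 a1 _ _ _ hi.
case: i hi => [|[|k]] // _.
elim: n => [|n IH] hS.
- have := hS k.+2; rewrite addn0 leqnn => /(_ isT) /andP [h1 h2].
  rewrite srttS //= expr1; split; nra.
- have [|l u] := IH.
    by move=> j /andP [j1 j2]; apply: hS; rewrite j1 /= (leq_trans j2) // addnS.
  have := hS (k.+2 + n.+1)%N; rewrite leqnn leq_addr => /(_ isT) /andP [h1 h2].
  have E : srtt a S (k.+2 + n.+1) = (1 - a) * srtt a S (k.+2 + n) + a * S (k.+2 + n.+1)%N.
    by rewrite addnS srttS // addSn.
  rewrite E exprS.
  set s := srtt a S _ in l u *; set t := srtt a S _ in l u *.
  set p := (1 - a) ^+ n.+1 in l u *.
  have b0 : 0 <= 1 - a by lra.
  have e1 := ler_wpM2l b0 l. have e2 := ler_wpM2l b0 u.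
  have f1 := ler_wpM2l (ltW a0) h1. have f2 := ler_wpM2l (ltW a0) h2.
  split; nra.
Qed.
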